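(* Let $n\ge5$ and $c\ge1$. Then the commutator subgroup $UW_n(c)'$ is perfect, i.e. $[UW_n(c)',UW_n(c)']=UW_n(c)'$.
   Context: $UV_n(c)$ ($n\ge2$, $c\ge1$) is the group with generators $\rho_i$ ($1\le i\le n-1$), $\sigma_{i,t}$ ($1\le i\le n-1$, $1\le t\le c$) and relations $\rho_i\rho_{i+1}\rho_i=\rho_{i+1}\rho_i\rho_{i+1}$ ($1\le i\le n-2$), $\rho_i\rho_j=\rho_j\rho_i$ ($|i-j|\ge2$), $\rho_i^2=1$, $\sigma_{i,t}\sigma_{j,\ell}=\sigma_{j,\ell}\sigma_{i,t}$ ($|i-j|\ge2$, $1\le t,\ell\le c$), $\sigma_{i,t}\rho_j=\rho_j\sigma_{i,t}$ ($|i-j|\ge2$), $\rho_i\rho_{i+1}\sigma_{i,t}=\sigma_{i+1,t}\rho_i\rho_{i+1}$ ($1\le i\le n-2$, $1\le t\le c$). The universal welded braid group $UW_n(c)$ is the quotient of $UV_n(c)$ by the additional relations $\rho_i\sigma_{i+1,t}\sigma_{i,t}=\sigma_{i+1,t}\sigma_{i,t}\rho_{i+1}$ for all $1\le i\le n-2$, $1\le t\le c$. *)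

(* Defs.v *)
(* the universal welded braid group UW_n(c) given by its
   presentation, realised as words in the generators modulo the congruence
   generated by free cancellation and the defining relations. *)
From Stdlib Require Import List Arith.
Import ListNotations.

Inductive gen : Type := Rho (i : nat) | Sig (i t : nat).

(* A letter is a generator with an exponent flag: false = g, true = g^{-1}. *)
Definition letter : Type := (gen * bool)%type.
Definition word : Type := list letter.

Definition valid_gen (n c : nat) (g : gen) : Prop :=
  match g with
  | Rho i => 1 <= i <= n - 1
  | Sig i t => 1 <= i <= n - 1 /\ 1 <= t <= c
  end.

Definition valid_word (n c : nat) (w : word) : Prop :=
  Forall (fun l => valid_gen n c (fst l)) w.

Definition rr (i : nat) : word := [(Rho i, false)].
Definition ss (i t : nat) : word := [(Sig i t, false)].

Inductive uv_rel (n c : nat) : word -> word -> Prop :=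
| R_braid i : 1 <= i -> i <= n - 2 ->
    uv_rel n c (rr i ++ rr (S i) ++ rr i) (rr (S i) ++ rr i ++ rr (S i))
| R_far i j : 1 <= i <= n - 1 -> 1 <= j <= n - 1 -> (i + 2 <= j \/ j + 2 <= i) ->
    uv_rel n c (rr i ++ rr j) (rr j ++ rr i)
| R_inv i : 1 <= i <= n - 1 ->
    uv_rel n c (rr i ++ rr i) []
| R_sfar i t j l : 1 <= i <= n - 1 -> 1 <= j <= n - 1 -> (i + 2 <= j \/ j + 2 <= i) ->
    1 <= t <= c -> 1 <= l <= c ->
    uv_rel n c (ss i t ++ ss j l) (ss j l ++ ss i t)
| R_mixfar i t j : 1 <= i <= n - 1 -> 1 <= j <= n - 1 -> (i + 2 <= j \/ j + 2 <= i) ->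
    1 <= t <= c ->
    uv_rel n c (ss i t ++ rr j) (rr j ++ ss i t)
| R_mix i t : 1 <= i -> i <= n - 2 -> 1 <= t <= c ->
    uv_rel n c (rr i ++ rr (S i) ++ ss i t) (ss (S i) t ++ rr i ++ rr (S i)).

Inductive uw_rel (n c : nat) : word -> word -> Prop :=
| UW_uv a b : uv_rel n c a b -> uw_rel n c a b
| UW_weld i t : 1 <= i -> i <= n - 2 -> 1 <= t <= c ->
    uw_rel n c (rr i ++ ss (S i) t ++ ss i t) (ss (S i) t ++ ss i t ++ rr (S i)).

Inductive uw_eq (n c : nat) : word -> word -> Prop :=
| E_rel u v a b : uw_rel n c a b -> uw_eq n c (u ++ a ++ v) (u ++ b ++ v)
| E_free u v g e : valid_gen n c g ->
    uw_eq n c (u ++ (g, e) :: (g, negb e) :: v) (u ++ v)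
| E_refl w : uw_eq n c w w
| E_sym w1 w2 : uw_eq n c w1 w2 -> uw_eq n c w2 w1
| E_trans w1 w2 w3 : uw_eq n c w1 w2 -> uw_eq n c w2 w3 -> uw_eq n c w1 w3.

Definition winv (w : word) : word := rev (map (fun l => (fst l, negb (snd l))) w).

Definition comm (u v : word) : word := winv u ++ winv v ++ u ++ v.

(* Since [a,b]^{-1} = [b,a], this is the subgroup generated by commutators. *)
Definition comm_subgroup (n c : nat) (H : word -> Prop) (w : word) : Prop :=
  valid_word n c w /\
  exists ps : list (word * word),
    Forall (fun p => H (fst p) /\ H (snd p)) ps /\
    uw_eq n c w (flat_map (fun p => comm (fst p) (snd p)) ps).

Definition derived (n c : nat) : word -> Prop :=
  comm_subgroup n c (valid_word n c).

(* Main.v *)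
Require Import Defs.
From Stdlib Require Import List Arith Lia.
Import ListNotations.

Lemma E_app_l n c u a b : uw_eq n c a b -> uw_eq n c (u ++ a) (u ++ b).
Proof.
  induction 1.
  - replace (u ++ u0 ++ a ++ v) with ((u ++ u0) ++ a ++ v) by now rewrite !app_assoc.
    replace (u ++ u0 ++ b ++ v) with ((u ++ u0) ++ b ++ v) by now rewrite !app_assoc.
    now constructor.
  - rewrite !app_assoc. now constructor.
  - apply E_refl.
  - now apply E_sym.
  - eapply E_trans; eauto.
Qed.

Lemma E_app_r n c v a b : uw_eq n c a b -> uw_eq n c (a ++ v) (b ++ v).
Proof.
  induction 1.
  - rewrite <- !app_assoc. now constructor.
  - rewrite <- !app_assoc. simpl. now constructor.
  - apply E_refl.
  - now apply E_sym.
  - eapply E_trans; eauto.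
Qed.

Lemma E_app n c a b a' b' : uw_eq n c a b -> uw_eq n c a' b' -> uw_eq n c (a ++ a') (b ++ b').
Proof. intros. eapply E_trans; [apply E_app_r; eauto| apply E_app_l; eauto]. Qed.

Lemma E_step n c k m (a b w w' : word) :
  uw_eq n c a b -> firstn m (skipn k w) = a ->
  uw_eq n c (firstn k w ++ b ++ skipn (k + m) w) w' -> uw_eq n c w w'.
Proof.
  intros Hab Ha H. eapply E_trans; [|exact H].
  assert (Hw : w = firstn k w ++ a ++ skipn (k+m) w).
  { rewrite <- Ha.
    replace (skipn (k+m) w) with (skipn m (skipn k w)) by (rewrite skipn_skipn; f_equal; lia).
    rewrite firstn_skipn, firstn_skipn. reflexivity. }
  rewrite Hw at 1. apply E_app_l, E_app_r, Hab.
Qed.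

Ltac rw k m H := eapply (E_step _ _ k m _ _ _ _ H); [reflexivity | cbn [firstn skipn app Nat.add]].
Ltac rwr k m H := apply E_sym; rw k m H; apply E_sym.
Ltac vw := unfold valid_word; repeat (apply Forall_cons || apply Forall_nil); simpl; lia.

Lemma winv_app a b : winv (a ++ b) = winv b ++ winv a.
Proof. unfold winv. now rewrite map_app, rev_app_distr. Qed.

Lemma winv_cons l a : winv (l :: a) = winv a ++ [(fst l, negb (snd l))].
Proof. reflexivity. Qed.

Lemma winv_winv a : winv (winv a) = a.
Proof.
  induction a as [|l a IH]; [reflexivity|].
  rewrite winv_cons, winv_app, IH. destruct l as [g e]. simpl. now rewrite Bool.negb_involutive.
Qed.

Lemma valid_app n c a b : valid_word n c a -> valid_word n c b -> valid_word n c (a ++ b).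
Proof. intros. apply Forall_app; auto. Qed.

Lemma valid_app_inv n c a b : valid_word n c (a ++ b) -> valid_word n c a /\ valid_word n c b.
Proof. intros H. now apply Forall_app in H. Qed.

Lemma valid_winv n c a : valid_word n c a -> valid_word n c (winv a).
Proof. intros H. unfold winv. apply Forall_rev, Forall_map. eapply Forall_impl; [|exact H]. simpl. auto. Qed.

Lemma valid_winv_inv n c a : valid_word n c (winv a) -> valid_word n c a.
Proof. intros H. rewrite <- (winv_winv a). now apply valid_winv. Qed.

Lemma E_cancel n c w : valid_word n c w -> uw_eq n c (w ++ winv w) [].
Proof.
  induction w as [|[g e] w IH]; intros H; [apply E_refl|].
  inversion H; subst. rewrite winv_cons. simpl.
  apply E_trans with ([(g,e)] ++ [(g, negb e)]).
  - apply (E_app_l n c [(g,e)]). rewrite app_assoc. apply (E_app_r n c _ _ []), IH; auto.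
  - simpl. apply (E_free n c [] [] g e). auto.
Qed.

Lemma E_cancel' n c w : valid_word n c w -> uw_eq n c (winv w ++ w) [].
Proof. intros H. rewrite <- (winv_winv w) at 2. apply E_cancel, valid_winv, H. Qed.

Lemma E_winv n c a b : valid_word n c a -> valid_word n c b -> uw_eq n c a b -> uw_eq n c (winv a) (winv b).
Proof.
  intros Ha Hb H.
  apply E_trans with (winv a ++ (b ++ winv b)).
  { rewrite <- (app_nil_r (winv a)) at 1. apply E_app_l, E_sym, E_cancel, Hb. }
  apply E_trans with ((winv a ++ a) ++ winv b).
  { rewrite <- app_assoc. apply E_app_l, E_app_r, E_sym, H. }
  change (winv b) with ([] ++ winv b) at 2. apply E_app_r, E_cancel', Ha.
Qed.

Definition F (ps : list (word * word)) : word := flat_map (fun p => comm (fst p) (snd p)) ps.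

Definition CS n c (H : word -> Prop) (w : word) : Prop :=
  valid_word n c w /\
  exists ps : list (word * word),
    Forall (fun p => H (fst p) /\ H (snd p)) ps /\ uw_eq n c w (F ps).

Lemma CS_eq n c H a b : CS n c H a -> valid_word n c b -> uw_eq n c a b -> CS n c H b.
Proof. intros [Va [ps [Hps E]]] Vb Eab. split; auto. exists ps. split; auto. eapply E_trans; [apply E_sym, Eab|exact E]. Qed.

Lemma CS_nil n c H : CS n c H [].
Proof. split. constructor. exists []. split. constructor. apply E_refl. Qed.

Lemma CS_app n c H a b : CS n c H a -> CS n c H b -> CS n c H (a ++ b).
Proof.
  intros [Va [ps [Hps Ea]]] [Vb [qs [Hqs Eb]]]. split; [now apply valid_app|].
  exists (ps ++ qs). split; [apply Forall_app; auto|]. unfold F. rewrite flat_map_app. now apply E_app.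
Qed.

Lemma valid_comm n c a b : valid_word n c a -> valid_word n c b -> valid_word n c (comm a b).
Proof. intros. unfold comm. repeat apply valid_app; auto using valid_winv. Qed.

Lemma valid_F n c H ps : (forall w, H w -> valid_word n c w) ->
  Forall (fun p => H (fst p) /\ H (snd p)) ps -> valid_word n c (F ps).
Proof.
  intros HV Hps. induction Hps as [|[a b] ps [Ha Hb] _ IH]; [constructor|].
  simpl in *. change (valid_word n c (comm a b ++ F ps)). apply valid_app; auto. apply valid_comm; auto.
Qed.

Lemma CS_comm n c H a b : (forall w, H w -> valid_word n c w) -> H a -> H b -> CS n c H (comm a b).
Proof.
  intros HV Ha Hb. split; [apply valid_comm; auto|]. exists [(a,b)]. split.
  - constructor; auto.
  - unfold F. simpl. rewrite app_nil_r. apply E_refl.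
Qed.

Lemma winv_comm a b : winv (comm a b) = comm b a.
Proof. unfold comm. rewrite !winv_app, !winv_winv. now rewrite <- !app_assoc. Qed.

Lemma winv_F ps : winv (F ps) = F (rev (map (fun p => (snd p, fst p)) ps)).
Proof.
  induction ps as [|[a b] ps IH]; [reflexivity|].
  simpl. unfold F in *. rewrite flat_map_app. simpl. rewrite winv_app, IH, winv_comm.
  simpl. now rewrite app_nil_r.
Qed.

Lemma CS_inv n c H a : (forall w, H w -> valid_word n c w) -> CS n c H a -> CS n c H (winv a).
Proof.
  intros HV [Va [ps [Hps Ea]]]. split; [now apply valid_winv|].
  exists (rev (map (fun p => (snd p, fst p)) ps)). split.
  - apply Forall_rev, Forall_map. eapply Forall_impl; [|exact Hps]. simpl. tauto.
  - rewrite <- winv_F. apply E_winv; auto. eapply valid_F; eauto.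
Qed.

Lemma E_cancel_mid n c x u y : valid_word n c u -> uw_eq n c (x ++ u ++ winv u ++ y) (x ++ y).
Proof. intros. apply E_app_l. rewrite app_assoc. change y with ([] ++ y) at 2. apply E_app_r, E_cancel; auto. Qed.

Lemma E_cancel_mid' n c x u y : valid_word n c u -> uw_eq n c (x ++ winv u ++ u ++ y) (x ++ y).
Proof. intros. apply E_app_l. rewrite app_assoc. change y with ([] ++ y) at 2. apply E_app_r, E_cancel'; auto. Qed.

Lemma CS_conj n c H a u : (forall w, H w -> valid_word n c w) ->
  (forall w v, H w -> valid_word n c v -> H (winv v ++ w ++ v)) ->
  CS n c H a -> valid_word n c u -> CS n c H (winv u ++ a ++ u).
Proof.
  intros HV HC [Va [ps [Hps Ea]]] Vu. split.
  { apply valid_app; [now apply valid_winv|]. now apply valid_app. }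
  exists (map (fun p => (winv u ++ fst p ++ u, winv u ++ snd p ++ u)) ps). split.
  { apply Forall_map. eapply Forall_impl; [|exact Hps]. simpl. intros p [H1 H2]. split; auto. }
  apply E_trans with (winv u ++ F ps ++ u). { apply E_app_l, E_app_r, Ea. }
  clear Ea Va a. induction Hps as [|[a b] ps [Ha Hb] Hps IH].
  - simpl. apply E_cancel'; auto.
  - simpl in *. unfold F at 1. simpl. fold (F ps).
    fold (F (map (fun p => (winv u ++ fst p ++ u, winv u ++ snd p ++ u)) ps)).
    eapply E_trans; [|apply E_app; [apply E_refl|exact IH]].
    unfold comm. rewrite !winv_app, !winv_winv. rewrite <- !app_assoc.
    apply E_app_l.
    assert (Va := HV _ Ha). assert (Vb := HV _ Hb).
    apply E_sym. 
    eapply E_trans; [apply E_cancel_mid, Vu|].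
    eapply E_trans; [apply E_app_l, E_cancel_mid, Vu|].
    eapply E_trans; [apply E_app_l, E_app_l, E_cancel_mid, Vu|].
    eapply E_trans; [apply E_app_l, E_app_l, E_app_l, E_cancel_mid, Vu|].
    apply E_refl.
Qed.

Lemma CS_mono n c (H H' : word -> Prop) w : (forall x, H x -> H' x) -> CS n c H w -> CS n c H' w.
Proof. intros HH [V [ps [Hps E]]]. split; auto. exists ps. split; auto. eapply Forall_impl; [|exact Hps]. simpl. intros p []; auto. Qed.


Notation R i := (Rho i, false).
Notation Ri i := (Rho i, true).
Notation Sg i t := (Sig i t, false).

Lemma relE n c a b : uw_rel n c a b -> uw_eq n c a b.
Proof. intro H. pose proof (E_rel n c [] [] a b H) as H'. simpl in H'. rewrite !app_nil_r in H'. exact H'. Qed.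

Lemma rrE n c i : 1 <= i <= n-1 -> uw_eq n c [R i; R i] [].
Proof. intro H. exact (relE _ _ _ _ (UW_uv _ _ _ _ (R_inv n c i H))). Qed.

Lemma freeE n c g e : valid_gen n c g -> uw_eq n c [(g,e);(g,negb e)] [].
Proof. intro H. exact (E_free n c [] [] g e H). Qed.

Lemma rinvE n c i : 1 <= i <= n-1 -> uw_eq n c [Ri i] [R i].
Proof.
  intro H. rw 1 0 (E_sym _ _ _ _ (rrE n c i H)).
  rw 0 2 (freeE n c (Rho i) true H). apply E_refl.
Qed.

Lemma braidE n c i : 1 <= i -> i <= n-2 -> uw_eq n c [R i; R (S i); R i] [R (S i); R i; R (S i)].
Proof. intros H1 H2. exact (relE _ _ _ _ (UW_uv _ _ _ _ (R_braid n c i H1 H2))). Qed.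

Lemma farE n c i j : 1 <= i <= n-1 -> 1 <= j <= n-1 -> (i + 2 <= j \/ j + 2 <= i) ->
  uw_eq n c [R i; R j] [R j; R i].
Proof. intros H1 H2 H3. exact (relE _ _ _ _ (UW_uv _ _ _ _ (R_far n c i j H1 H2 H3))). Qed.

Lemma sfarE n c i t j l : 1 <= i <= n-1 -> 1 <= j <= n-1 -> (i + 2 <= j \/ j + 2 <= i) ->
  1 <= t <= c -> 1 <= l <= c -> uw_eq n c [Sg i t; Sg j l] [Sg j l; Sg i t].
Proof. intros H1 H2 H3 H4 H5. exact (relE _ _ _ _ (UW_uv _ _ _ _ (R_sfar n c i t j l H1 H2 H3 H4 H5))). Qed.

Lemma mixfarE n c i t j : 1 <= i <= n-1 -> 1 <= j <= n-1 -> (i + 2 <= j \/ j + 2 <= i) ->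
  1 <= t <= c -> uw_eq n c [Sg i t; R j] [R j; Sg i t].
Proof. intros H1 H2 H3 H4. exact (relE _ _ _ _ (UW_uv _ _ _ _ (R_mixfar n c i t j H1 H2 H3 H4))). Qed.

Lemma mixE n c i t : 1 <= i -> i <= n-2 -> 1 <= t <= c ->
  uw_eq n c [R i; R (S i); Sg i t] [Sg (S i) t; R i; R (S i)].
Proof. intros H1 H2 H3. exact (relE _ _ _ _ (UW_uv _ _ _ _ (R_mix n c i t H1 H2 H3))). Qed.

Definition D n c := CS n c (valid_word n c).
Definition approx n c x y := CS n c (D n c) (x ++ winv y).

Lemma D_valid n c w : D n c w -> valid_word n c w.
Proof. intros [V _]; auto. Qed.

Lemma D_conj n c w v : D n c w -> valid_word n c v -> D n c (winv v ++ w ++ v).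
Proof.
  intros. apply CS_conj; auto.
  intros. apply valid_app; [now apply valid_winv|]. now apply valid_app.
Qed.

Lemma D2_conj n c w v : CS n c (D n c) w -> valid_word n c v -> CS n c (D n c) (winv v ++ w ++ v).
Proof. intros. apply CS_conj; auto using D_valid, D_conj. Qed.

Lemma approx_valid n c x y : approx n c x y -> valid_word n c x /\ valid_word n c y.
Proof. intros [V _]. apply valid_app_inv in V as [V1 V2]. split; auto. now apply valid_winv_inv. Qed.

Lemma approx_nil n c w : CS n c (D n c) w -> approx n c w [].
Proof. unfold approx. simpl. now rewrite app_nil_r. Qed.

Lemma approx_nil' n c w : approx n c w [] -> CS n c (D n c) w.
Proof. unfold approx. simpl. now rewrite app_nil_r. Qed.

Lemma approx_refl n c x : valid_word n c x -> approx n c x x.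
Proof.
  intros V. eapply CS_eq; [apply CS_nil| |apply E_sym, E_cancel, V].
  apply valid_app; auto using valid_winv.
Qed.

Lemma approx_sym n c x y : approx n c x y -> approx n c y x.
Proof.
  intros H. apply (CS_inv _ _ _ _ (D_valid n c)) in H. unfold approx.
  rewrite winv_app, winv_winv in H. exact H.
Qed.

Lemma approx_trans n c x y z : approx n c x y -> approx n c y z -> approx n c x z.
Proof.
  intros H1 H2. destruct (approx_valid _ _ _ _ H1) as [Vx Vy].
  destruct (approx_valid _ _ _ _ H2) as [_ Vz].
  pose proof (CS_app _ _ _ _ _ H1 H2) as H. eapply CS_eq; [exact H| |].
  - apply valid_app; auto using valid_winv.
  - rewrite <- app_assoc. apply E_cancel_mid', Vy.
Qed.

Lemma approx_l n c u x y : approx n c x y -> valid_word n c u -> approx n c (u ++ x) (u ++ y).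
Proof.
  intros H Vu. pose proof (D2_conj _ _ _ _ H (valid_winv _ _ _ Vu)) as H'.
  rewrite winv_winv in H'. unfold approx. rewrite winv_app. rewrite <- !app_assoc in *. exact H'.
Qed.

Lemma approx_r n c v x y : approx n c x y -> valid_word n c v -> approx n c (x ++ v) (y ++ v).
Proof.
  intros H Vv. destruct (approx_valid _ _ _ _ H) as [Vx Vy].
  eapply CS_eq; [exact H| |].
  - apply valid_app; [apply valid_app; auto|]. apply valid_winv, valid_app; auto.
  - rewrite winv_app, <- !app_assoc. apply E_sym, E_cancel_mid, Vv.
Qed.

Lemma approx_E n c x y : valid_word n c x -> valid_word n c y -> uw_eq n c x y -> approx n c x y.
Proof.
  intros Vx Vy H. eapply CS_eq; [apply (approx_refl n c y Vy)| |].
  - apply valid_app; auto using valid_winv.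
  - apply E_app_r, E_sym, H.
Qed.

Lemma approx_app n c a b a' b' : approx n c a b -> approx n c a' b' -> approx n c (a ++ a') (b ++ b').
Proof.
  intros H1 H2. destruct (approx_valid _ _ _ _ H1) as [Va Vb].
  destruct (approx_valid _ _ _ _ H2) as [Va' Vb'].
  eapply approx_trans; [apply approx_r; eauto| apply approx_l; eauto].
Qed.


Lemma D_step n c a : 1 <= a -> a <= n-2 -> D n c [R a; R (S a)].
Proof.
  intros H1 H2. eapply CS_eq; [apply (CS_comm n c (valid_word n c) [R a] [R (S a); R a])| |]; auto; try vw.
  unfold comm, winv; simpl.
  assert (Ha : 1 <= a <= n-1) by lia. assert (Hb : 1 <= S a <= n-1) by lia.
  rw 0 1 (rinvE n c a Ha). rw 1 1 (rinvE n c a Ha). rw 2 1 (rinvE n c (S a) Hb).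
  rw 0 2 (rrE n c a Ha). rw 0 3 (E_sym _ _ _ _ (braidE n c a H1 H2)).
  rw 2 2 (rrE n c a Ha). apply E_refl.
Qed.

Lemma D_r1 n c b : 1 <= b <= n-1 -> D n c [R 1; R b].
Proof.
  induction b as [|b IH]; intros Hb; [lia|].
  destruct b as [|b].
  - eapply CS_eq; [apply CS_nil| vw |]. apply E_sym, rrE. lia.
  - eapply CS_eq; [apply (CS_app _ _ _ _ _ (IH ltac:(lia)) (D_step n c (S b) ltac:(lia) ltac:(lia)))| vw |].
    simpl. rw 1 2 (rrE n c (S b) ltac:(lia)). apply E_refl.
Qed.

Lemma D_rab n c a b : 1 <= a <= n-1 -> 1 <= b <= n-1 -> D n c [R a; R b].
Proof.
  intros Ha Hb.
  pose proof (CS_inv n c _ _ (fun w H => H) (D_r1 n c a Ha)) as H1.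
  eapply CS_eq; [apply (CS_app _ _ _ _ _ H1 (D_r1 n c b Hb))| vw |].
  unfold winv; simpl.
  rw 0 1 (rinvE n c a Ha). rw 1 1 (rinvE n c 1 ltac:(lia)).
  rw 1 2 (rrE n c 1 ltac:(lia)). apply E_refl.
Qed.

Lemma key_rho n c i k k' : 1 <= i -> i <= n-2 -> 1 <= k <= n-1 -> 1 <= k' <= n-1 ->
  (k + 2 <= S i \/ S i + 2 <= k) -> (k' + 2 <= i \/ i + 2 <= k') ->
  (k = k' \/ k + 2 <= k' \/ k' + 2 <= k) -> approx n c [R i] [R (S i)].
Proof.
  intros Hi1 Hi2 Hk Hk' Hfk Hfk' Hkk.
  assert (Hi : 1 <= i <= n-1) by lia. assert (Hs : 1 <= S i <= n-1) by lia.
  pose proof (CS_comm n c (D n c) [R i; R k] [R (S i); R k'] (D_valid n c)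
     (D_rab n c i k Hi Hk) (D_rab n c (S i) k' Hs Hk')) as H.
  pose proof (D2_conj n c _ [R k; R k'] H ltac:(vw)) as H2.
  assert (HX : CS n c (D n c) [R i; R (S i); R i; R (S i)]).
  { eapply CS_eq; [exact H2| vw |]. unfold comm, winv; simpl.
    rw 0 1 (rinvE n c k' Hk'). rw 1 1 (rinvE n c k Hk).
    rw 2 1 (rinvE n c k Hk). rw 3 1 (rinvE n c i Hi).
    rw 4 1 (rinvE n c k' Hk'). rw 5 1 (rinvE n c (S i) Hs).
    rw 1 2 (rrE n c k Hk). rw 1 2 (farE n c i k' Hi Hk' ltac:(lia)).
    rw 0 2 (rrE n c k' Hk'). rw 3 2 (farE n c k (S i) Hk Hs Hfk).
    destruct Hkk as [<-|Hkk].
    - rw 4 2 (rrE n c k Hk). rw 4 2 (rrE n c k Hk). apply E_refl.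
    - rw 5 2 (farE n c k' k Hk' Hk ltac:(lia)). rw 4 2 (rrE n c k Hk). rw 4 2 (rrE n c k' Hk').
      apply E_refl. }
  pose proof (CS_app _ _ _ _ _ HX HX) as HXX.
  eapply CS_eq; [exact HXX| vw |]. simpl.
  rw 0 3 (braidE n c i Hi1 Hi2). rw 2 2 (rrE n c (S i) Hs). rw 1 2 (rrE n c i Hi).
  rw 0 2 (rrE n c (S i) Hs). rwr 1 1 (rinvE n c (S i) Hs). apply E_refl.
Qed.



Lemma rho_step n c i : 5 <= n -> 1 <= i -> i <= n-2 -> approx n c [R i] [R (S i)].
Proof.
  intros Hn H1 H2.
  destruct (Nat.eq_dec i 1) as [->|Hne].
  - apply (key_rho n c 1 4 4); lia.
  - destruct (le_lt_dec i (n-3)).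
    + apply (key_rho n c i (i-1) (i+2)); lia.
    + apply (key_rho n c i (i-2) (i-2)); lia.
Qed.

Lemma rho_all n c i : 5 <= n -> 1 <= i <= n-1 -> approx n c [R i] [R 1].
Proof.
  intros Hn. induction i as [|i IH]; intros Hi; [lia|].
  destruct i as [|i].
  - apply approx_refl. vw.
  - eapply approx_trans; [apply approx_sym, rho_step; lia| apply IH; lia].
Qed.

Lemma sig_step n c i t : 5 <= n -> 1 <= i -> i <= n-2 -> 1 <= t <= c ->
  approx n c [Sg i t] [Sg (S i) t].
Proof.
  intros Hn H1 H2 Ht.
  assert (Hi : 1 <= i <= n-1) by lia. assert (Hs : 1 <= S i <= n-1) by lia.
  assert (h1 : approx n c [R i; R (S i)] []).
  { eapply approx_trans; [apply (approx_r n c [R (S i)] [R i] [R (S i)]); [apply rho_step; lia | vw]|].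
    apply approx_E; try vw. apply rrE; lia. }
  assert (h2 : approx n c [R i; R (S i); Sg i t] [Sg i t]).
  { apply (approx_r n c [Sg i t] _ _ h1). vw. }
  assert (h3 : approx n c [Sg (S i) t; R i; R (S i)] [Sg (S i) t]).
  { pose proof (approx_l n c [Sg (S i) t] _ _ h1 ltac:(vw)) as h. simpl in h. exact h. }
  eapply approx_trans; [apply approx_sym, h2|].
  eapply approx_trans; [|exact h3].
  apply approx_E; try vw. apply mixE; lia.
Qed.

Lemma sig_all n c i t : 5 <= n -> 1 <= i <= n-1 -> 1 <= t <= c -> approx n c [Sg i t] [Sg 1 t].
Proof.
  intros Hn Hi Ht. induction i as [|i IH]; [lia|].
  destruct i as [|i].
  - apply approx_refl. vw.
  - eapply approx_trans; [apply approx_sym, sig_step; lia| apply IH; lia].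
Qed.

Definition g1 (g : gen) : gen := match g with Rho _ => Rho 1 | Sig _ t => Sig 1 t end.
Definition g3 (g : gen) : gen := match g with Rho _ => Rho 3 | Sig _ t => Sig 3 t end.

Lemma gen_to n c g k : 5 <= n -> 1 <= k <= n-1 -> valid_gen n c g ->
  approx n c [(g,false)] [(match g with Rho _ => Rho k | Sig _ t => Sig k t end, false)].
Proof.
  intros Hn Hk Hg. destruct g as [i|i t]; simpl in Hg.
  - eapply approx_trans; [apply rho_all; lia|]. apply approx_sym, rho_all; lia.
  - eapply approx_trans; [apply sig_all; lia|]. apply approx_sym, sig_all; lia.
Qed.

Lemma gen_comm n c g h : 5 <= n -> valid_gen n c g -> valid_gen n c h ->
  approx n c [(g,false);(h,false)] [(h,false);(g,false)].
Proof.
  intros Hn Hg Hh.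
  pose proof (gen_to n c g 1 Hn ltac:(lia) Hg) as A1.
  pose proof (gen_to n c h 3 Hn ltac:(lia) Hh) as A3.
  pose proof (approx_app _ _ _ _ _ _ A1 A3) as B. simpl in B.
  pose proof (approx_app _ _ _ _ _ _ A3 A1) as C. simpl in C.
  eapply approx_trans; [exact B|]. eapply approx_trans; [|apply approx_sym; exact C].
  apply approx_E; destruct g as [i|i t], h as [j|j l]; simpl in *; try vw.
  - apply farE; lia.
  - apply E_sym, mixfarE; lia.
  - apply mixfarE; lia.
  - apply sfarE; lia.
Qed.

Lemma flipT n c g x : valid_gen n c g -> valid_gen n c (fst x) ->
  approx n c [(g,false); x] [x; (g,false)] -> approx n c [(g,true); x] [x; (g,true)].
Proof.
  intros Hg Hx H.
  assert (V : valid_word n c [(g,true)]) by (constructor; auto).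
  pose proof (approx_r n c [(g,true)] _ _ (approx_l n c [(g,true)] _ _ H V) V) as H1. simpl in H1.
  apply approx_sym. eapply approx_trans; [|eapply approx_trans; [exact H1|]].
  - apply approx_E. { constructor; auto. } { repeat constructor; auto. }
    rwr 0 2 (freeE n c g true Hg). apply E_refl.
  - apply approx_E. { repeat constructor; auto. } { constructor; auto. }
    rw 2 2 (freeE n c g false Hg). apply E_refl.
Qed.

Lemma letter_comm n c l1 l2 : 5 <= n -> valid_gen n c (fst l1) -> valid_gen n c (fst l2) ->
  approx n c [l1; l2] [l2; l1].
Proof.
  intros Hn H1 H2. destruct l1 as [g e1], l2 as [h e2]. simpl in *.
  assert (B : approx n c [(g,false);(h,false)] [(h,false);(g,false)]) by (apply gen_comm; auto).
  assert (F2 : forall x, valid_gen n c (fst x) -> approx n c [x;(h,false)] [(h,false);x] ->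
                         approx n c [x;(h,true)] [(h,true);x]).
  { intros x Hx Hb. apply approx_sym. apply flipT; auto. apply approx_sym; auto. }
  assert (FT : approx n c [(g,false);(h,true)] [(h,true);(g,false)]) by (apply F2; auto).
  destruct e1, e2.
  - apply flipT; auto.
  - apply flipT; auto.
  - exact FT.
  - exact B.
Qed.

Lemma letter_word n c l b : 5 <= n -> valid_gen n c (fst l) -> valid_word n c b ->
  approx n c (l :: b) (b ++ [l]).
Proof.
  intros Hn Hl Hb. induction Hb as [|x b Hx Hb IH].
  - apply approx_refl. constructor; auto.
  - eapply approx_trans.
    + apply (approx_r n c b [l;x] [x;l]); auto. apply letter_comm; auto.
    + apply (approx_l n c [x] (l :: b) (b ++ [l])); auto. constructor; auto.
Qed.

Lemma word_comm n c a b : 5 <= n -> valid_word n c a -> valid_word n c b ->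
  approx n c (a ++ b) (b ++ a).
Proof.
  intros Hn Ha Hb. induction Ha as [|l a Hl Ha IH].
  - rewrite app_nil_r. apply approx_refl; auto.
  - eapply approx_trans.
    + apply (approx_l n c [l] (a ++ b) (b ++ a)); auto. constructor; auto.
    + change ([l] ++ b ++ a) with ((l :: b) ++ a).
      replace (b ++ l :: a) with ((b ++ [l]) ++ a) by (rewrite <- app_assoc; reflexivity).
      apply approx_r; auto. apply letter_word; auto.
Qed.

Lemma comm_approx n c a b : 5 <= n -> valid_word n c a -> valid_word n c b ->
  approx n c (comm a b) [].
Proof.
  intros Hn Ha Hb. unfold comm.
  eapply approx_trans.
  - rewrite app_assoc. apply approx_l; [apply word_comm; auto|]. apply valid_app; apply valid_winv; auto.
  - apply approx_E.
    + repeat apply valid_app; auto using valid_winv.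
    + constructor.
    + rewrite <- app_assoc.
      eapply E_trans; [apply E_cancel_mid', Hb|]. apply E_cancel', Ha.
Qed.

Lemma F_approx n c ps : 5 <= n -> Forall (fun p => valid_word n c (fst p) /\ valid_word n c (snd p)) ps ->
  approx n c (F ps) [].
Proof.
  intros Hn H. induction H as [|[a b] ps [Ha Hb] _ IH].
  - apply approx_refl. constructor.
  - change (F ((a,b)::ps)) with (comm a b ++ F ps). change (@nil letter) with ((@nil letter) ++ []).
    apply approx_app; auto. apply comm_approx; auto.
Qed.

Theorem theorem5p8 (n c : nat) (hn : 5 <= n) (hc : 1 <= c) :
  forall w : word, comm_subgroup n c (derived n c) w <-> derived n c w.
Proof.
  intros w. split.
  - intros H. change (CS n c (D n c) w) in H. change (D n c w).
    eapply CS_mono; [|exact H]. apply D_valid.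
  - intros H. change (D n c w) in H. change (CS n c (D n c) w).
    destruct H as [Vw [ps [Hps E]]].
    apply approx_nil'. eapply approx_trans; [|apply (F_approx n c ps hn Hps)].
    apply approx_E; auto. eapply valid_F; [|exact Hps]. auto.
Qed.
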